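(* Let $k$ be a field of characteristic $p\ne2$ and $G=\mathrm{SL}_n(k)=\mathrm{SL}(V)$. Assume that $x\in G$ is an involution, $y\in G$ is a unipotent element with quadratic minimal polynomial (i.e. minimal polynomial $(T-1)^2$), and $z\in G$ is a regular unipotent element (a unipotent element with a single Jordan block of size $n$ on $V$). Then $xyz\ne1$. *)

(* Defs.v *)
From mathcomp Require Import all_boot all_order all_algebra.
Set Implicit Arguments. Unset Strict Implicit. Unset Printing Implicit Defensive.
Import GRing.Theory.
Local Open Scope ring_scope.

Definition unip_jordan_block (k : fieldType) (m : nat) : 'M[k]_m :=
  \matrix_(i < m, j < m) ((i == j :> nat)%:R + (j == i.+1 :> nat)%:R).

Definition regular_unipotent (k : fieldType) (m : nat) (z : 'M[k]_m) : Prop :=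
  exists2 P : 'M[k]_m, P \in unitmx & z = invmx P *m unip_jordan_block k m *m P.

(* Main.v *)
Require Import Defs.
From mathcomp Require Import all_boot all_order all_algebra.
From mathcomp Require Import zify.
From Stdlib Require Import Lia.
Import GRing.Theory.
Local Open Scope ring_scope.

Lemma hp (k : fieldType) n m (A : 'M[k]_n.+1) :
  horner_mx A (('X - 1) ^+ m) = (A - 1) ^+ m.
Proof. by rewrite rmorphXn rmorphB /= horner_mx_X rmorph1. Qed.

Lemma trmxX (k : fieldType) n m (A : 'M[k]_n.+1) : (A ^+ m)^T = (A^T) ^+ m.
Proof.
elim: m => [|m IH]; first by rewrite !expr0 -idmxE trmx1.
by rewrite exprSr -mulmxE trmx_mul IH mulmxE -exprS.
Qed.

Lemma nilp (k : fieldType) n (z : 'M[k]_n.+1) :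
  regular_unipotent z -> (z - 1) ^+ n.+1 = 0.
Proof.
case=> P Pu ->.
set J := unip_jordan_block k n.+1.
have HJ : (J^T - 1) ^+ n.+1 = 0.
  have := Cayley_Hamilton J^T.
  rewrite char_poly_trig; last first.
    apply/is_trig_mxP => i j lij; rewrite !mxE.
    by rewrite gtn_eqF // ltn_eqF ?addr0 // ltnW.
  rewrite (eq_bigr (fun _ => 'X - 1)); last first.
    by move=> i _; rewrite !mxE eqxx ltn_eqF // addr0 polyC1.
  by rewrite prodr_const card_ord hp.
have HJ' : (J - 1) ^+ n.+1 = 0.
  by apply: trmx_inj; rewrite trmxX linearB /= -idmxE trmx1 idmxE HJ linear0.
have := hp _ _ n.+1 (invmx P *m J *m P).
rewrite horner_mx_uconjC // hp HJ' mulmx0 mul0mx.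
by move=> <-.
Qed.

Lemma filt (R : pzRingType) m (N C : R) : N ^+ m = 0 ->
  (forall M : R, M *+ 2 = 0 -> M = 0) ->
  (N + 1) * C * (N + 1) + C = 0 -> C = 0.
Proof.
move=> Nm two eqC.
have Nz a : (m <= a)%N -> N ^+ a = 0.
  by move=> ha; rewrite -(subnK ha) exprD Nm mulr0.
suff H : forall t a b, (2 * m <= a + b + t)%N -> N ^+ a * C * N ^+ b = 0.
  by have := H (2 * m)%N 0%N 0%N (leqnn _); rewrite expr0 mulr1 mul1r.
elim=> [|t IH] a b hab.
  rewrite addn0 in hab.
  case: (leqP m a) => ha; first by rewrite Nz // !mul0r.
  by rewrite (Nz b) ?mulr0 //; lia.
apply: two.
have := congr1 (fun X => N ^+ a * X * N ^+ b) eqC.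
rewrite mulr0 mul0r !mulrDr !mulrDl !mulr1 !mul1r !mulrDr !mulrDl.
have e1 : N ^+ a * (N * C) * N ^+ b = N ^+ a.+1 * C * N ^+ b by rewrite exprSr !mulrA.
have e2 : N ^+ a * (C * N) * N ^+ b = N ^+ a * C * N ^+ b.+1 by rewrite exprS !mulrA.
have e3 : N ^+ a * (N * C * N) * N ^+ b = N ^+ a.+1 * C * N ^+ b.+1 by rewrite (exprSr N a) (exprS N b) !mulrA.
rewrite e1 e2 e3 (IH a.+1 b) ?(IH a b.+1) ?(IH a.+1 b.+1) ?addr0 ?add0r ?mulr2n; try lia.
exact: id.
Qed.
Lemma zm1 (V : zmodType) (S x z : V) : S - (z *+ 2 - x) = x - z - (z - S).
Proof. by rewrite !opprB [RHS]addrACA mulr2n opprD [LHS]addrA [S + x]addrC. Qed.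
Lemma zm2 (V : zmodType) (A B D : V) : A - B - (A - D) + (B - D) = 0.
Proof. by rewrite opprB addrACA subrK addrAC subrr add0r subrr. Qed.
Lemma zm3 (V : zmodType) (A E Z : V) : A - E - Z - (Z - E) = A - Z *+ 2.
Proof. by rewrite opprB addrAC addrA subrK mulr2n opprD addrA. Qed.
Lemma zm4 (V : zmodType) (X E : V) : E - X - (X - E) = - ((X - E) *+ 2).
Proof. by rewrite opprB mulr2n opprD opprB. Qed.

Theorem lemma4p1 (k : fieldType) (n : nat) (x y z : 'M[k]_n.+1) :
  ~~ (2 \in [pchar k]) ->
  \det x = 1 -> \det y = 1 -> \det z = 1 ->
  x *m x = 1%:M -> x != 1%:M ->
  mxminpoly y = ('X - 1) ^+ 2 ->
  regular_unipotent z ->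
  x *m y *m z != 1%:M.
Proof.
move=> ch2 _ _ dz xx xn1 my zu.
rewrite !mulmxE idmxE in xx xn1 *.
apply/negP => /eqP E.
have two : (2%:R : k) != 0 by move: ch2; rewrite inE /=.
have two' : forall M : 'M[k]_n.+1, M *+ 2 = 0 -> M = 0.
  by move=> M /eqP; rewrite -scaler_nat scalemx_eq0 (negbTE two) /= => /eqP.
have zU : z \is a GRing.unit by rewrite unitmxE dz unitr1.
have y2 : (y - 1) ^+ 2 = 0 by have := mx_root_minpoly y; rewrite my hp.
have yz : y * z = x.
  by rewrite -(mul1r (y * z)) -xx -mulrA (mulrA x y z) E mulr1.
have yw : y = x * z^-1 by rewrite -yz mulrK.
have a1 : x * (y - 1) = z^-1 - x by rewrite mulrBr mulr1 yw mulrA xx mul1r.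
have a2 : (y - 1) * z = x - z by rewrite mulrBl mul1r yz.
have : (z^-1 - x) * (x - z) = 0.
  by rewrite -a1 -a2 mulrA -(mulrA x) -expr2 y2 mulr0 mul0r.
rewrite mulrBl !mulrBr mulVr // xx => e0.
have e1 : x - z - (z - z * x * z) = 0.
  have := congr1 (fun M => z * M) e0.
  by rewrite /= mulr0 !mulrBr mulr1 mulrA mulrV // mul1r mulrA.
have H3 : z * x * z = z *+ 2 - x.
  by apply/eqP; rewrite -subr_eq0 -e1; apply/eqP; apply: zm1.
set C := x * z - z * x.
have CC : (z - 1 + 1) * C * (z - 1 + 1) + C = 0.
  rewrite subrK /C mulrBr mulrBl !mulrA H3 -(mulrA z) -(mulrA z) H3.
  by rewrite mulrBl mulrBr mulrnAl mulrnAr zm2.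
have C0 := filt _ _ _ _ (nilp _ _ _ zu) two' CC.
have xz : x * z = z * x by apply/eqP; rewrite -subr_eq0; apply/eqP.
set D := x - 1.
set N := z - 1.
have Nm : N ^+ n.+1 = 0 := nilp _ _ _ zu.
have zz : z * z = (x * z) *+ 2 - 1.
  have := congr1 (fun M => x * M) H3.
  by rewrite /= mulrA -xz mulrA xx mul1r mulrBr mulrnAr xx.
have NN : N * N = (D * z) *+ 2.
  by rewrite /N /D mulrBl mulrBr mul1r mulr1 zz mulrBl mul1r mulrnBl zm3.
have cDz : GRing.comm D z by rewrite /GRing.comm /D mulrBl mulrBr mul1r mulr1 xz.
have Dm : D ^+ n.+1 = 0.
  have h : (N * N) ^+ n.+1 = 0 by rewrite exprMn_comm // Nm mul0r.
  rewrite NN exprMn_n exprMn_comm // in h.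
  move/eqP: h; rewrite -scaler_nat scalemx_eq0 natrX expf_eq0 (negbTE two) andbF /= => /eqP h.
  by rewrite -(mulrK (unitrX n.+1 zU) (D ^+ n.+1)) h mul0r.
have DD : D * D = (-2 : k) *: D.
  by rewrite scaleNr scaler_nat /D mulrBl mulrBr xx mul1r mulr1 zm4.
have Dk : forall j, D ^+ j.+1 = ((-2) ^+ j : k) *: D.
  elim=> [|j IH]; first by rewrite expr1 expr0 scale1r.
  by rewrite exprSr IH -scalerAl DD scalerA -exprSr.
have : ((-2) ^+ n : k) *: D = 0 by rewrite -Dk.
move/eqP; rewrite scalemx_eq0 expf_eq0 oppr_eq0 (negbTE two) andbF /= subr_eq0 => /eqP x1.
by rewrite x1 eqxx in xn1.
Qed.
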